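(* Let $\mathbb{K}\in\{\mathbb{R},\mathbb{C},\mathbb{H}\}$, $d(\mathbb{K})=1,2,4$ respectively, and $S(\mathbb{K})$ the group of elements of norm $1$ in $\mathbb{K}$ (so $\mathbb{Z}_2$, $U(1)$, $\mathrm{Sp}(1)$). For $k\geqslant 2$ let $S(\mathbb{K})^{k-1}$ act linearly on $\mathbb{K}^k$ by \[ (g_1,\ldots,g_{k-1})\cdot(q_1,\ldots,q_k)=(q_1g_1^{-1},\,g_1q_2g_2^{-1},\,\ldots,\,g_{k-2}q_{k-1}g_{k-1}^{-1},\,g_{k-1}q_k). \] Then the orbit space $\mathbb{K}^k/S(\mathbb{K})^{k-1}$ is homeomorphic to $\mathbb{R}^{d(\mathbb{K})+k-1}$. *)

(* Defs.v *)
From HB Require Import structures.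
From mathcomp Require Import all_boot all_order all_algebra.
From mathcomp Require Import all_classical all_reals topology normedtype matrix_topology.
Import numFieldNormedType.Exports.
From mathcomp Require Import ring.

Set Implicit Arguments.
Unset Strict Implicit.
Unset Printing Implicit Defensive.

Import Order.TTheory GRing.Theory Num.Theory.
Local Open Scope ring_scope.

Inductive KK := KR | KC | KH.

Definition dK (K : KK) : nat := match K with KR => 1 | KC => 2 | KH => 4 end.

Lemma dK_gt0 K : (0 < dK K)%N. Proof. by case: K. Qed.
Lemma dK_le4 K : (dK K <= 4)%N. Proof. by case: K. Qed.

Section Quaternions.
Variable R : realType.

(* Quaternions a + b i + c j + d k; K is realised as the real subspace of
   H spanned by the first d(K) basis vectors 1, i, j, k
   (R = span{1}, C = span{1,i}, H = everything). *)
Record quat := Quat { qa : R; qb : R; qc : R; qd : R }.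

Definition qone : quat := Quat 1 0 0 0.

Definition qmul (p q : quat) : quat :=
  Quat (qa p * qa q - qb p * qb q - qc p * qc q - qd p * qd q)
       (qa p * qb q + qb p * qa q + qc p * qd q - qd p * qc q)
       (qa p * qc q - qb p * qd q + qc p * qa q + qd p * qb q)
       (qa p * qd q + qb p * qc q - qc p * qb q + qd p * qa q).

Definition qconj (q : quat) : quat := Quat (qa q) (- qb q) (- qc q) (- qd q).

Definition qnorm2 (q : quat) : R := qa q ^+ 2 + qb q ^+ 2 + qc q ^+ 2 + qd q ^+ 2.

Definition qscale (r : R) (q : quat) : quat :=
  Quat (r * qa q) (r * qb q) (r * qc q) (r * qd q).

Definition qinv (q : quat) : quat := qscale (qnorm2 q)^-1 (qconj q).

Definition qcomp (q : quat) (n : nat) : R := nth 0 [:: qa q; qb q; qc q; qd q] n.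

Definition coord (d : nat) (v : 'rV[R]_d) (n : nat) : R :=
  if @insub nat (fun m => (m < d)%N) 'I_d n is Some i then v ord0 i else 0.

Definition emb (d : nat) (v : 'rV[R]_d) : quat :=
  Quat (coord v 0) (coord v 1) (coord v 2) (coord v 3).

Definition rowq (m d : nat) (M : 'M[R]_(m, d)) (i : 'I_m) : quat := emb (row i M).

End Quaternions.

Section Action.
Variables (R : realType) (K : KK) (k : nat).
Local Notation d := (dK K).

(* An element (q_1,...,q_k) of K^k is a k x d(K) real matrix (row i = q_{i+1});
   an element (g_1,...,g_{k-1}) of S(K)^{k-1} is a (k-1) x d(K) real matrix
   whose rows have norm 1. *)

(* g_{n+1} for n < k-1, and 1 otherwise *)
Definition gext (G : 'M[R]_(k.-1, d)) (n : nat) : quat R :=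
  if @insub nat (fun m => (m < k.-1)%N) 'I_(k.-1) n is Some o then rowq G o
  else qone R.

(* left factor of coordinate i (0-based): 1 for i = 0, else g_i *)
Definition lfac (G : 'M[R]_(k.-1, d)) (i : 'I_k) : quat R :=
  if val i is n.+1 then gext G n else qone R.

(* right factor of coordinate i (0-based): g_{i+1}, and 1 for i = k-1 *)
Definition rfac (G : 'M[R]_(k.-1, d)) (i : 'I_k) : quat R := gext G i.

Definition unit_tuple (G : 'M[R]_(k.-1, d)) : Prop :=
  forall o : 'I_(k.-1), qnorm2 (rowq G o) = 1.

Definition act (G : 'M[R]_(k.-1, d)) (X : 'M[R]_(k, d)) : 'M[R]_(k, d) :=
  \matrix_(i < k, j < d)
    qcomp (qmul (qmul (lfac G i) (rowq X i)) (qinv (rfac G i))) j.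

Definition same_orbit (X Y : 'M[R]_(k, d)) : Prop :=
  exists G : 'M[R]_(k.-1, d), unit_tuple G /\ act G X = Y.

Definition orbit_rel : rel 'M[R]_(k, d) := fun X Y => `[< same_orbit X Y >].

End Action.

Section Equiv.
Variable R : realType.

Lemma qmulA (p q r : quat R) : qmul p (qmul q r) = qmul (qmul p q) r.
Proof. case: p q r => [? ? ? ?] [? ? ? ?] [? ? ? ?]; rewrite /qmul /=; congr Quat; ring. Qed.
Lemma qmul1q (q : quat R) : qmul (qone R) q = q.
Proof. case: q => ? ? ? ?; rewrite /qmul /=; congr Quat; ring. Qed.
Lemma qmulq1 (q : quat R) : qmul q (qone R) = q.
Proof. case: q => ? ? ? ?; rewrite /qmul /=; congr Quat; ring. Qed.
Lemma qconj_mul (p q : quat R) : qconj (qmul p q) = qmul (qconj q) (qconj p).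
Proof. case: p q => [? ? ? ?] [? ? ? ?]; rewrite /qmul /qconj /=; congr Quat; ring. Qed.
Lemma qconjK (q : quat R) : qconj (qconj q) = q.
Proof. by case: q => ? ? ? ?; rewrite /qconj /= !opprK. Qed.
Lemma qnorm2_mul (p q : quat R) : qnorm2 (qmul p q) = qnorm2 p * qnorm2 q.
Proof. case: p q => [? ? ? ?] [? ? ? ?]; rewrite /qnorm2 /qmul /=; ring. Qed.
Lemma qnorm2_conj (q : quat R) : qnorm2 (qconj q) = qnorm2 q.
Proof. case: q => ? ? ? ?; rewrite /qnorm2 /qconj /=; ring. Qed.
Lemma qnorm2_one : qnorm2 (qone R) = 1.
Proof. rewrite /qnorm2 /=; ring. Qed.
Lemma qconj_one : qconj (qone R) = qone R.
Proof. by rewrite /qconj /= oppr0. Qed.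
Lemma qinv_unit (u : quat R) : qnorm2 u = 1 -> qinv u = qconj u.
Proof.
move=> h; rewrite /qinv h invr1; case: u h => ? ? ? ? _.
by rewrite /qscale /qconj /= !mul1r.
Qed.
Lemma qconjM_unit (u : quat R) : qnorm2 u = 1 -> qmul (qconj u) u = qone R.
Proof.
case: u => a b c e; rewrite /qnorm2 /qmul /qconj /qone /= => h.
congr Quat; rewrite -?h; ring.
Qed.
Lemma qmulconj_unit (u : quat R) : qnorm2 u = 1 -> qmul u (qconj u) = qone R.
Proof.
case: u => a b c e; rewrite /qnorm2 /qmul /qconj /qone /= => h.
congr Quat; rewrite -?h; ring.
Qed.

Definition inK (d : nat) (q : quat R) := forall j, (d <= j)%N -> qcomp q j = 0.

Lemma qcompE (q : quat R) : Quat (qcomp q 0) (qcomp q 1) (qcomp q 2) (qcomp q 3) = q.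
Proof. by case: q. Qed.

Lemma coord_lt d (v : 'rV[R]_d) j (h : (j < d)%N) : coord v j = v ord0 (Ordinal h).
Proof. by rewrite /coord insubT. Qed.
Lemma coord_ge d (v : 'rV[R]_d) j : (d <= j)%N -> coord v j = 0.
Proof. by move=> h; rewrite /coord insubF // ltnNge h. Qed.

Lemma qcomp_emb d (v : 'rV[R]_d) j : (d <= 4)%N -> qcomp (emb v) j = coord v j.
Proof.
move=> hd; case: j => [|[|[|[|j]]]] //=.
by rewrite /qcomp /= nth_nil coord_ge // (leq_trans hd).
Qed.

Lemma emb_inj d (v w : 'rV[R]_d) : (d <= 4)%N -> emb v = emb w -> v = w.
Proof.
move=> hd e; apply/rowP => i.
have E (u : 'rV[R]_d) : u ord0 i = qcomp (emb u) i.
  rewrite qcomp_emb // (coord_lt _ (ltn_ord i)); congr (u _ _); exact: val_inj.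
by rewrite !E e.
Qed.

Lemma coord_row d (f : nat -> R) n :
  coord (\row_(j < d) f j) n = if (n < d)%N then f n else 0.
Proof. by case: ltnP => h; [rewrite (coord_lt _ h) mxE | rewrite coord_ge]. Qed.

Lemma emb_proj d (q : quat R) : (d <= 4)%N -> inK d q ->
  emb (\row_(j < d) qcomp q j) = q.
Proof.
move=> hd hq; have H n : (if (n < d)%N then qcomp q n else 0) = qcomp q n.
  by case: ltnP => // h; rewrite hq.
by rewrite /emb !coord_row !H qcompE.
Qed.

Lemma qcomp_conj (q : quat R) j : (0 < j)%N -> qcomp (qconj q) j = - qcomp q j.
Proof. by case: j => [|[|[|[|j]]]] //= _; rewrite /qcomp /= nth_nil oppr0. Qed.
Lemma qcomp_scale r (q : quat R) j : qcomp (qscale r q) j = r * qcomp q j.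
Proof. by case: j => [|[|[|[|j]]]] //=; rewrite /qcomp /= nth_nil mulr0. Qed.

Lemma inK_emb K (v : 'rV[R]_(dK K)) : inK (dK K) (emb v).
Proof. by move=> j hj; rewrite qcomp_emb ?dK_le4 // coord_ge. Qed.
Lemma inK_one K : inK (dK K) (qone R).
Proof.
move=> j hj; case: j hj => [|[|[|[|j]]]] //=; first by rewrite leqNgt dK_gt0.
by rewrite /qcomp /= nth_nil.
Qed.
Lemma inK_conj K (q : quat R) : inK (dK K) q -> inK (dK K) (qconj q).
Proof.
move=> hq j hj; rewrite qcomp_conj ?hq ?oppr0 //.
exact: leq_trans (dK_gt0 K) hj.
Qed.
Lemma inK_inv K (q : quat R) : inK (dK K) q -> inK (dK K) (qinv q).
Proof. by move=> hq j hj; rewrite /qinv qcomp_scale (inK_conj hq hj) mulr0. Qed.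
Lemma inK_mul K (p q : quat R) :
  inK (dK K) p -> inK (dK K) q -> inK (dK K) (qmul p q).
Proof.
case: p q => [a b c e] [a' b' c' e'] hp hq j hj.
case: K hp hq hj => hp hq hj.
- move: (hp 1%N isT) (hp 2%N isT) (hp 3%N isT) (hq 1%N isT) (hq 2%N isT) (hq 3%N isT).
  rewrite /qcomp /= => -> -> -> -> -> ->.
  by case: j hj => [|[|[|[|j]]]] //= _; rewrite /qcomp /= ?nth_nil //; ring.
- move: (hp 2%N isT) (hp 3%N isT) (hq 2%N isT) (hq 3%N isT).
  rewrite /qcomp /= => -> -> -> ->.
  by case: j hj => [|[|[|[|j]]]] //= _; rewrite /qcomp /= ?nth_nil //; ring.
- by case: j hj => [|[|[|[|j]]]] //= _; rewrite /qcomp /= ?nth_nil.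
Qed.

End Equiv.

Section EquivAct.
Variables (R : realType) (K : KK) (k : nat).
Local Notation d := (dK K).
Local Notation same_orbit := (@same_orbit R K k).
Local Notation act := (@act R K k).
Local Notation unit_tuple := (@unit_tuple R K k).
Local Notation gext := (@gext R K k).
Local Notation lfac := (@lfac R K k).
Local Notation rfac := (@rfac R K k).

Lemma inK_gext (G : 'M[R]_(k.-1, d)) n : inK d (gext G n).
Proof. rewrite /gext; case: insub => [o|]; [exact: inK_emb | exact: inK_one]. Qed.
Lemma inK_lfac (G : 'M[R]_(k.-1, d)) i : inK d (lfac G i).
Proof. rewrite /lfac; case: (val i) => [|n]; [exact: inK_one | exact: inK_gext]. Qed.

Lemma unit_gext (G : 'M[R]_(k.-1, d)) n : unit_tuple G -> qnorm2 (gext G n) = 1.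
Proof. by move=> hG; rewrite /gext; case: insub => [o|]; [exact: hG | exact: qnorm2_one]. Qed.
Lemma unit_lfac (G : 'M[R]_(k.-1, d)) i : unit_tuple G -> qnorm2 (lfac G i) = 1.
Proof. by move=> hG; rewrite /lfac; case: (val i) => [|n]; [exact: qnorm2_one | exact: unit_gext]. Qed.

Lemma act_rowsP (G : 'M[R]_(k.-1, d)) X Y :
  act G X = Y <->
  forall i, rowq Y i = qmul (qmul (lfac G i) (rowq X i)) (qinv (rfac G i)).
Proof.
split.
- move=> <- i; rewrite /rowq.
  have -> : row i (act G X) =
    \row_(j < d) qcomp (qmul (qmul (lfac G i) (rowq X i)) (qinv (rfac G i))) j.
    by apply/rowP => j; rewrite !mxE.
  apply: emb_proj; first exact: dK_le4.
  by apply: inK_mul; [apply: inK_mul; [exact: inK_lfac | exact: inK_emb]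
                     | apply: inK_inv; exact: inK_gext].
- move=> H; apply/matrixP => i j; rewrite mxE -H /rowq qcomp_emb ?dK_le4 //.
  by rewrite (coord_lt _ (ltn_ord j)) mxE; congr (Y _ _); exact: val_inj.
Qed.

Lemma gext_map (G G' : 'M[R]_(k.-1, d)) (f : quat R -> quat R) :
  f (qone R) = qone R -> (forall o, rowq G' o = f (rowq G o)) ->
  forall n, gext G' n = f (gext G n).
Proof. by move=> f1 hf n; rewrite /gext; case: insub => [o|]. Qed.

Lemma lfac_map (G G' : 'M[R]_(k.-1, d)) (f : quat R -> quat R) :
  f (qone R) = qone R -> (forall o, rowq G' o = f (rowq G o)) ->
  forall i, lfac G' i = f (lfac G i).
Proof. by move=> f1 hf i; rewrite /lfac; case: (val i) => // n; apply: gext_map. Qed.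

Lemma same_orbit_refl X : same_orbit X X.
Proof.
pose G0 : 'M[R]_(k.-1, d) := \matrix_(o, j) (val j == 0%N)%:R.
have r1 o : rowq G0 o = qone R.
  rewrite /rowq (_ : row o G0 = \row_(j < d) (j == 0%N :> nat)%:R); last first.
    by apply/rowP => j; rewrite !mxE.
  by rewrite /emb !(coord_row _ (fun n : nat => (n == 0%N)%:R)) dK_gt0 !if_same.
have hl i : lfac G0 i = qone R.
  by rewrite (@lfac_map G0 G0 (fun _ => qone R)).
have hr i : rfac G0 i = qone R.
  by rewrite /rfac (@gext_map G0 G0 (fun _ => qone R)).
exists G0; split; first by move=> o; rewrite r1 qnorm2_one.
apply/act_rowsP => i; rewrite hl hr qinv_unit ?qnorm2_one // qconj_one.
by rewrite qmul1q qmulq1.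
Qed.

Lemma same_orbit_sym X Y : same_orbit X Y -> same_orbit Y X.
Proof.
move=> [G [hG /act_rowsP hXY]].
pose G' : 'M[R]_(k.-1, d) := \matrix_(o, j) qcomp (qconj (rowq G o)) j.
have r1 o : rowq G' o = qconj (rowq G o).
  rewrite /rowq (_ : row o G' = \row_(j < d) qcomp (qconj (rowq G o)) j).
    by apply: emb_proj; [exact: dK_le4 | apply: inK_conj; exact: inK_emb].
  by apply/rowP => j; rewrite !mxE.
have hl i : lfac G' i = qconj (lfac G i) by apply: lfac_map => //; exact: qconj_one.
have hr i : rfac G' i = qconj (rfac G i) by apply: gext_map => //; exact: qconj_one.
exists G'; split; first by move=> o; rewrite r1 qnorm2_conj.
apply/act_rowsP => i; rewrite hl hr hXY.
have uL := unit_lfac i hG; have uR : qnorm2 (rfac G i) = 1 by exact: unit_gext.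
rewrite !qinv_unit ?qnorm2_conj // qconjK.
by rewrite !qmulA (qconjM_unit uL) qmul1q -qmulA (qconjM_unit uR) qmulq1.
Qed.

Lemma same_orbit_trans X Y Z : same_orbit X Y -> same_orbit Y Z -> same_orbit X Z.
Proof.
move=> [G [hG /act_rowsP hXY]] [H [hH /act_rowsP hYZ]].
pose G'' : 'M[R]_(k.-1, d) := \matrix_(o, j) qcomp (qmul (rowq H o) (rowq G o)) j.
have r1 o : rowq G'' o = qmul (rowq H o) (rowq G o).
  rewrite /rowq (_ : row o G'' = \row_(j < d) qcomp (qmul (rowq H o) (rowq G o)) j).
    by apply: emb_proj; [exact: dK_le4 | apply: inK_mul; exact: inK_emb].
  by apply/rowP => j; rewrite !mxE.
have hl i : lfac G'' i = qmul (lfac H i) (lfac G i).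
  rewrite /lfac; case: (val i) => [|n]; first by rewrite qmul1q.
  by rewrite /gext; case: insub => [o|]; [exact: r1 | rewrite qmul1q].
have hr i : rfac G'' i = qmul (rfac H i) (rfac G i).
  by rewrite /rfac /gext; case: insub => [o|]; [exact: r1 | rewrite qmul1q].
exists G''; split; first by move=> o; rewrite r1 qnorm2_mul hH hG mulr1.
apply/act_rowsP => i; rewrite hl hr hYZ hXY.
have uRG : qnorm2 (rfac G i) = 1 by exact: unit_gext.
have uRH : qnorm2 (rfac H i) = 1 by exact: unit_gext.
rewrite !qinv_unit ?qnorm2_mul ?uRG ?uRH ?mulr1 // qconj_mul.
by rewrite !qmulA.
Qed.

Lemma orbit_rel_equiv : equiv_class_of (@orbit_rel R K k).
Proof.
split.
- by move=> X; apply/asboolP; exact: same_orbit_refl.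
- by move=> X Y; apply/idP/idP => /asboolP h; apply/asboolP; exact: same_orbit_sym.
- move=> Y X Z /asboolP h1 /asboolP h2; apply/asboolP; exact: same_orbit_trans h1 h2.
Qed.

End EquivAct.

Canonical orbit_equiv_rel (R : realType) (K : KK) (k : nat) :=
  EquivRelPack (@orbit_rel_equiv R K k).

Local Open Scope quotient_scope.

Notation orbit_space R K k :=
  (quotient_topology {eq_quot (@orbit_rel R K k)}).

Definition homeomorphism {X Y : topologicalType} (f : X -> Y) (g : Y -> X) : Prop :=
  [/\ cancel f g, cancel g f, continuous f & continuous g].

(* Main.v *)
Require Import Defs.
From HB Require Import structures.
From mathcomp Require Import all_boot all_order all_algebra.
From mathcomp Require Import all_classical all_reals topology normedtype matrix_topology.
Import numFieldNormedType.Exports.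
From mathcomp Require Import ring lra.
Set Implicit Arguments.
Unset Strict Implicit.
Unset Printing Implicit Defensive.
Import Order.TTheory GRing.Theory Num.Theory.
Local Open Scope ring_scope.
Section QAlg.
Variable R : realType.
Implicit Types (p q a b : quat R) (r s : R).

Definition qz : quat R := Quat 0 0 0 0.
Definition qreal r : quat R := Quat r 0 0 0.

Lemma qnorm2_ge0 q : 0 <= qnorm2 q.
Proof. case: q => a b c e; rewrite /qnorm2 /=; nra. Qed.

Lemma qnorm2_eq0 q : qnorm2 q = 0 -> q = qz.
Proof.
case: q => a b c e; rewrite /qnorm2 /= => h.
have ha : a = 0 by nra. have hb : b = 0 by nra.
have hc : c = 0 by nra. have he : e = 0 by nra.
by rewrite ha hb hc he.
Qed.

Lemma qmul_scalel r p q : qmul (qscale r p) q = qscale r (qmul p q).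
Proof. case: p q => [? ? ? ?] [? ? ? ?]; rewrite /qmul /qscale /=; congr Quat; ring. Qed.
Lemma qmul_scaler r p q : qmul p (qscale r q) = qscale r (qmul p q).
Proof. case: p q => [? ? ? ?] [? ? ? ?]; rewrite /qmul /qscale /=; congr Quat; ring. Qed.
Lemma qmul_conjr q : qmul q (qconj q) = qreal (qnorm2 q).
Proof. case: q => ? ? ? ?; rewrite /qmul /qconj /qreal /qnorm2 /=; congr Quat; ring. Qed.
Lemma qmul_conjl q : qmul (qconj q) q = qreal (qnorm2 q).
Proof. case: q => ? ? ? ?; rewrite /qmul /qconj /qreal /qnorm2 /=; congr Quat; ring. Qed.
Lemma qmul_reall r q : qmul (qreal r) q = qscale r q.
Proof. case: q => ? ? ? ?; rewrite /qmul /qscale /qreal /=; congr Quat; ring. Qed.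
Lemma qmul_realr r q : qmul q (qreal r) = qscale r q.
Proof. case: q => ? ? ? ?; rewrite /qmul /qscale /qreal /=; congr Quat; ring. Qed.
Lemma qscaleA r s q : qscale r (qscale s q) = qscale (r * s) q.
Proof. case: q => ? ? ? ?; rewrite /qscale /=; congr Quat; ring. Qed.
Lemma qscale1 q : qscale 1 q = q.
Proof. case: q => ? ? ? ?; rewrite /qscale /=; congr Quat; ring. Qed.
Lemma qnorm2_scale r q : qnorm2 (qscale r q) = r ^+ 2 * qnorm2 q.
Proof. case: q => ? ? ? ?; rewrite /qnorm2 /qscale /=; ring. Qed.
Lemma qmulz q : qmul qz q = qz.
Proof. case: q => ? ? ? ?; rewrite /qmul /qz /=; congr Quat; ring. Qed.
Lemma qmulzr q : qmul q qz = qz.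
Proof. case: q => ? ? ? ?; rewrite /qmul /qz /=; congr Quat; ring. Qed.
Lemma qconj_scale r q : qconj (qscale r q) = qscale r (qconj q).
Proof. case: q => ? ? ? ?; rewrite /qconj /qscale /=; congr Quat; ring. Qed.
Lemma qconjz : qconj qz = qz.
Proof. by rewrite /qconj /qz /= oppr0. Qed.
Lemma qnorm2z : qnorm2 qz = 0.
Proof. by rewrite /qnorm2 /=; ring. Qed.

Lemma inK_scale K r q : inK (dK K) q -> inK (dK K) (qscale r q).
Proof. by move=> hq j hj; rewrite qcomp_scale hq // mulr0. Qed.
Lemma inK_real K r : inK (dK K) (qreal r).
Proof.
move=> j hj; case: j hj => [|[|[|[|j]]]] //=; first by rewrite leqNgt dK_gt0.
by rewrite /qcomp /= nth_nil.
Qed.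
Lemma inK_z K : inK (dK K) qz.
Proof. by move=> j hj; case: j hj => [|[|[|[|j]]]] //=; rewrite /qcomp /= nth_nil. Qed.

Lemma two_unique K a b a' b' :
  inK (dK K) a -> inK (dK K) b -> inK (dK K) a' -> inK (dK K) b' ->
  qmul a b = qmul a' b' -> qnorm2 a - qnorm2 b = qnorm2 a' - qnorm2 b' ->
  exists u, [/\ inK (dK K) u, qnorm2 u = 1, qmul a (qconj u) = a' & qmul u b = b'].
Proof.
move=> ha hb ha' hb' hab hn.
have hm : qnorm2 a * qnorm2 b = qnorm2 a' * qnorm2 b' by rewrite -!qnorm2_mul hab.
have g1 := qnorm2_ge0 a; have g2 := qnorm2_ge0 b.
have g3 := qnorm2_ge0 a'; have g4 := qnorm2_ge0 b'.
have hs : (qnorm2 a + qnorm2 b) ^+ 2 = (qnorm2 a' + qnorm2 b') ^+ 2 by nra.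
have hs' : qnorm2 a + qnorm2 b = qnorm2 a' + qnorm2 b'.
  by apply/eqP; rewrite -(@eqrXn2 _ 2) ?hs // addr_ge0.
have na : qnorm2 a' = qnorm2 a by lra.
have nb : qnorm2 b' = qnorm2 b by lra.
have [a0|an0] := eqVneq (qnorm2 a) 0.
  have -> : a = qz by exact: qnorm2_eq0.
  have -> : a' = qz by apply: qnorm2_eq0; rewrite na.
  have [b0|bn0] := eqVneq (qnorm2 b) 0.
    have -> : b = qz by exact: qnorm2_eq0.
    have -> : b' = qz by apply: qnorm2_eq0; rewrite nb.
    exists (qone R); split; [exact: inK_one|exact: qnorm2_one|exact: qmulz|exact: qmulzr].
  exists (qscale (qnorm2 b)^-1 (qmul b' (qconj b))); split.
  - apply: inK_scale; apply: inK_mul => //; exact: inK_conj.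
  - rewrite qnorm2_scale qnorm2_mul qnorm2_conj nb; field; exact: bn0.
  - exact: qmulz.
  - rewrite qmul_scalel -qmulA qmul_conjl qmul_realr qscaleA mulVf // qscale1 //.
exists (qscale (qnorm2 a)^-1 (qmul (qconj a') a)); split.
- apply: inK_scale; apply: inK_mul => //; exact: inK_conj.
- rewrite qnorm2_scale qnorm2_mul qnorm2_conj na; field; exact: an0.
- rewrite qconj_scale qmul_scaler qconj_mul qconjK qmulA qmul_conjr qmul_reall.
  by rewrite qscaleA mulVf // qscale1.
- rewrite qmul_scalel -qmulA hab qmulA qmul_conjl qmul_reall qscaleA na mulVf // qscale1 //.
Qed.

End QAlg.
Fixpoint prodf (R : realType) (f : nat -> quat R) (j m : nat) : quat R :=
  if m is m'.+1 then qmul (f j) (prodf f j.+1 m') else qone R.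

Section Seq.
Variables (R : realType) (K : KK) (k : nat).
Local Notation d := (dK K).
Local Notation M := 'M[R]_(k, d).

Definition xn (X : M) (n : nat) : quat R :=
  if @insub nat (fun m => (m < k)%N) 'I_k n is Some i then rowq X i else qone R.

Definition Sf (f : nat -> quat R) j := prodf f j (k - j)%N.
Definition Sx (X : M) j := Sf (xn X) j.

Lemma SfS f j : (j < k)%N -> Sf f j = qmul (f j) (Sf f j.+1).
Proof. by move=> hj; rewrite /Sf -subnSK. Qed.
Lemma Sfk f : Sf f k = qone R.
Proof. by rewrite /Sf subnn. Qed.

Lemma Sf_ext f g j : (forall i, (j <= i < k)%N -> f i = g i) -> Sf f j = Sf g j.
Proof.
move=> h; rewrite /Sf; move hm: (k - j)%N => m.
elim: m j h hm => [|m IH] j h hm //=.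
have hj : (j < k)%N by rewrite -subn_gt0 hm.
rewrite h ?leqnn ?hj // IH //; last by rewrite subnS hm.
by move=> i /andP [hi1 hi2]; apply: h; rewrite hi2 andbT ltnW.
Qed.

Lemma xn_ord (X : M) (i : 'I_k) : xn X i = rowq X i.
Proof. by rewrite /xn valK. Qed.

Lemma xn_lt (X : M) j (hj : (j < k)%N) : xn X j = rowq X (Ordinal hj).
Proof. exact: (xn_ord X (Ordinal hj)). Qed.

Lemma inK_xn (X : M) j : inK d (xn X j).
Proof. rewrite /xn; case: insub => [o|]; [exact: inK_emb | exact: inK_one]. Qed.

Lemma inK_Sf f j : (forall i, inK d (f i)) -> inK d (Sf f j).
Proof.
move=> h; rewrite /Sf; move: (k - j)%N => m; elim: m j => [|m IH] j /=; first exact: inK_one.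
exact: inK_mul.
Qed.

Definition tinv (X : M) j := qnorm2 (xn X j) - qnorm2 (Sx X j.+1).

Lemma gext_k (G : 'M[R]_(k.-1, d)) : gext G k.-1 = qone R.
Proof. by rewrite /gext insubF // ltnn. Qed.

Lemma Sx_act (G : 'M[R]_(k.-1, d)) (X : M) j : unit_tuple G -> (j <= k)%N ->
  Sx (act G X) j = qmul (if j == 0%N then qone R else gext G j.-1) (Sx X j).
Proof.
move=> hG; move hm: (k - j)%N => m.
elim: m j hm => [|m IH] j hm hjk.
  have ej : j = k by apply/eqP; rewrite eqn_leq hjk /= -subn_eq0 hm.
  subst j; rewrite /Sx !Sfk.
  by case: eqP => _; rewrite ?gext_k qmul1q.
have hj : (j < k)%N by rewrite -subn_gt0 hm.
rewrite /Sx SfS // -/(Sx _ _) IH //; last by rewrite subnS hm.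
rewrite SfS // -/(Sx _ _).
have /act_rowsP H := erefl (act G X).
rewrite (xn_lt _ hj) H -(xn_lt _ hj).
rewrite qinv_unit; last exact: unit_gext.
have -> : lfac G (Ordinal hj) = (if j == 0%N then qone R else gext G j.-1).
  by rewrite /lfac /=; case: j {hm IH hjk} hj.
rewrite /rfac /=.
rewrite -!qmulA; congr qmul; congr qmul.
by rewrite qmulA qconjM_unit ?qmul1q //; exact: unit_gext.
Qed.

Lemma tinv_act (G : 'M[R]_(k.-1, d)) (X : M) j : unit_tuple G -> (j < k)%N ->
  tinv (act G X) j = tinv X j.
Proof.
move=> hG hj; rewrite /tinv Sx_act // qnorm2_mul unit_gext // mul1r.
have /act_rowsP H := erefl (act G X).
rewrite (xn_lt _ hj) H -(xn_lt _ hj) !qnorm2_mul unit_lfac // mul1r.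
by rewrite qinv_unit ?qnorm2_conj ?unit_gext ?mulr1.
Qed.

Lemma Sx0_act (G : 'M[R]_(k.-1, d)) (X : M) : unit_tuple G ->
  Sx (act G X) 0 = Sx X 0.
Proof. by move=> hG; rewrite Sx_act // qmul1q. Qed.

End Seq.
Section Inj.
Variables (R : realType) (K : KK) (k : nat).
Local Notation d := (dK K).
Local Notation M := 'M[R]_(k, d).
Local Notation xn := (@xn R K k).
Local Notation Sx := (@Sx R K k).
Local Notation tinv := (@tinv R K k).

Lemma rowq_row m (A : 'M[R]_(m, d)) (f : 'I_m -> quat R) :
  (forall o, inK d (f o)) -> (forall o c, A o c = qcomp (f o) c) ->
  forall o, rowq A o = f o.
Proof.
move=> hK hA o; rewrite /rowq -[f o](emb_proj (dK_le4 K) (hK o)); congr emb.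
by apply/rowP => c; rewrite !mxE hA.
Qed.

Lemma mx_eq_rows (Z Y : M) : (forall i, rowq Z i = rowq Y i) -> Z = Y.
Proof. by move=> h; apply/row_matrixP => i; apply: (emb_inj (dK_le4 K)); exact: h. Qed.

Lemma move_exists (X : M) b u : (b < k.-1)%N -> inK d u -> qnorm2 u = 1 ->
  exists Y, same_orbit X Y /\ forall i, (i < k)%N ->
    xn Y i = qmul (qmul (if i == b.+1 then u else qone R) (xn X i))
                  (if i == b then qconj u else qone R).
Proof.
move=> hb hu nu.
pose G : 'M[R]_(k.-1, d) :=
  \matrix_(o, c) qcomp (if val o == b then u else qone R) c.
have rG o : rowq G o = if val o == b then u else qone R.
  apply: (@rowq_row _ G (fun o : 'I_k.-1 => if val o == b then u else qone R)).
    by move=> o'; case: eqP => _ //; exact: inK_one.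
  by move=> o' c; rewrite mxE.
have gG n : gext G n = if n == b then u else qone R.
  rewrite /gext; case: insubP => [o _ <-|hn]; first exact: rG.
  by case: eqP => // e; move: hn; rewrite e hb.
have hG : unit_tuple G by move=> o; rewrite rG; case: eqP => _ //; exact: qnorm2_one.
exists (act G X); split; first by exists G.
move=> i hi; have /act_rowsP H := erefl (act G X).
rewrite !(xn_lt _ hi) H /rfac /lfac gG /=.
rewrite qinv_unit; last by case: eqP => _ //; exact: qnorm2_one.
congr qmul; last by case: eqP => _ //; exact: qconj_one.
congr qmul; case: i hi {H} => [|i] hi //=.
Qed.

Lemma inj_orbit (X Y : M) : (0 < k)%N ->
  (forall j, (j < k.-1)%N -> tinv X j = tinv Y j) -> Sx X 0 = Sx Y 0 ->
  same_orbit X Y.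
Proof.
move=> k0 ht h0.
have P : forall m, (m <= k.-1)%N -> exists Z, [/\ same_orbit X Z,
  (forall i, (i < m)%N -> xn Z i = xn Y i), Sx Z m = Sx Y m,
  (forall i, (m < i)%N -> (i < k)%N -> xn Z i = xn X i) &
  qnorm2 (xn Z m) = qnorm2 (xn X m)].
  elim=> [_|m IH hm].
    by exists X; split => //; exact: same_orbit_refl.
  have hmk : (m < k.-1)%N by [].
  have hmk' : (m.+1 < k)%N by rewrite -(prednK k0).
  have hmk'' : (m < k)%N by exact: ltnW.
  have [Z [oZ eZ sZ fZ nZ]] := IH (ltnW hm).
  have sZ1 : Sx Z m.+1 = Sx X m.+1.
    by apply: Sf_ext => i /andP [h1 h2]; exact: fZ.
  have [u [uK un ua ub]] : exists u, [/\ inK d u, qnorm2 u = 1,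
      qmul (xn Z m) (qconj u) = xn Y m & qmul u (Sx Z m.+1) = Sx Y m.+1].
    apply: two_unique; [exact: inK_xn|apply: inK_Sf; exact: inK_xn|exact: inK_xn|apply: inK_Sf; exact: inK_xn| |].
      by rewrite /Sx -!SfS //; exact: sZ.
    by rewrite nZ sZ1 -/(tinv X m) ht.
  have [Z' [oZ' eZ']] := move_exists Z hmk uK un.
  have fZ' : forall i, (m.+1 < i)%N -> (i < k)%N -> xn Z' i = xn Z i.
    move=> i h1 h2.
    have n1 : (i == m.+1) = false by apply/negbTE; rewrite neq_ltn h1 orbT.
    have n2 : (i == m) = false.
      by apply/negbTE; rewrite neq_ltn (ltn_trans (ltnSn m) h1) orbT.
    by rewrite eZ' // n1 n2 qmul1q qmulq1.
  exists Z'; split.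
  - exact: same_orbit_trans oZ oZ'.
  - move=> i hi; have hik : (i < k)%N by exact: ltn_trans hi hmk'.
    rewrite (eZ' _ hik).
    have [ei|ni] := eqVneq i m.
      by rewrite ei (ltn_eqF (ltnSn m)) qmul1q.
    have him : (i < m)%N by rewrite ltn_neqAle ni -ltnS.
    have n1 : (i == m.+1) = false.
      by apply/negbTE; rewrite neq_ltn (ltn_trans him (ltnSn m)).
    rewrite n1 qmul1q qmulq1; exact: eZ.
  - rewrite /Sx SfS; last exact: hmk'.
    rewrite -/(Sx _ _) (_ : Sx Z' m.+2 = Sx Z m.+2).
      rewrite (eZ' _ hmk') eqxx (gtn_eqF (ltnSn m)) qmulq1.
      rewrite -qmulA /Sx -SfS; last exact: hmk'.
      exact: ub.
    by apply: Sf_ext => i /andP [h1 h2]; exact: fZ'.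
  - move=> i h1 h2; rewrite fZ' //; exact: fZ (ltn_trans (ltnSn m) h1) h2.
  - rewrite (eZ' _ hmk') eqxx (gtn_eqF (ltnSn m)) qmulq1.
    by rewrite qnorm2_mul un mul1r fZ.
have [Z [oZ eZ sZ _ _]] := P k.-1 (leqnn _).
suff -> : Y = Z by exact: oZ.
apply: mx_eq_rows => i; rewrite -(xn_ord Y) -(xn_ord Z).
have [hi|hi] := ltnP i k.-1; first by rewrite (eZ _ hi).
have ei : val i = k.-1.
  by apply/eqP; rewrite eqn_leq hi andbT -ltnS prednK // ltn_ord.
have hk1 : (k.-1 < k)%N by rewrite prednK.
move: sZ; rewrite /Sx (SfS (xn Y) hk1) (SfS (xn Z) hk1) (prednK k0) !Sfk !qmulq1 ei.
by move=> ->.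
Qed.

End Inj.
Section Surj.
Variable R : realType.

Definition qsplit (t : R) (P : quat R) : quat R * quat R :=
  let s := Num.sqrt (t ^+ 2 + 4 * qnorm2 P) in
  (qreal (Num.sqrt ((s + t) / 2)),
   if qnorm2 P == 0 then qreal (Num.sqrt ((s - t) / 2))
   else qscale (Num.sqrt ((s + t) / 2))^-1 P).

Lemma qnorm2_real (r : R) : qnorm2 (qreal r) = r ^+ 2.
Proof. rewrite /qnorm2 /=; ring. Qed.
Lemma qmul_real2 (r s : R) : qmul (qreal r) (qreal s) = qreal (r * s).
Proof. rewrite /qmul /qreal /=; congr Quat; ring. Qed.

Lemma qsplit_ok t P :
  qmul (qsplit t P).1 (qsplit t P).2 = P /\
  qnorm2 (qsplit t P).1 - qnorm2 (qsplit t P).2 = t.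
Proof.
rewrite /qsplit /=; set N := qnorm2 P; set s := Num.sqrt (t ^+ 2 + 4 * N).
have N0 : 0 <= N by exact: qnorm2_ge0.
have s0 : 0 <= s by exact: sqrtr_ge0.
have s2 : s ^+ 2 = t ^+ 2 + 4 * N by rewrite sqr_sqrtr // addr_ge0 ?sqr_ge0 // mulr_ge0.
have st1 : 0 <= s + t by nra.
have st2 : 0 <= s - t by nra.
have [N0'|Nn0] := eqVneq N 0.
  have eP : P = qz R by exact: qnorm2_eq0.
  rewrite qmul_real2 !qnorm2_real -sqrtrM ?divr_ge0 //.
  rewrite !sqr_sqrtr ?divr_ge0 //; split; last by field.
  rewrite eP; have -> : (s + t) / 2 * ((s - t) / 2) = 0.
    have -> : (s + t) / 2 * ((s - t) / 2) = (s ^+ 2 - t ^+ 2) / 4 by field.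
    by rewrite s2 N0' mulr0 addr0 subrr mul0r.
  by rewrite sqrtr0.
have Ngt : 0 < N by rewrite lt_def Nn0 N0.
have stp : 0 < s + t.
  have : t ^+ 2 < s ^+ 2 by rewrite s2; nra.
  nra.
have ap : 0 < Num.sqrt ((s + t) / 2) by rewrite sqrtr_gt0; nra.
split.
  by rewrite qmul_reall qscaleA mulfV ?qscale1 // gt_eqF.
rewrite qnorm2_real qnorm2_scale -/N exprVn sqr_sqrtr; last nra.
have hst : s + t != 0 by rewrite gt_eqF.
have eN : N = (s ^+ 2 - t ^+ 2) / 4 by rewrite s2; field.
by rewrite eN; field.
Qed.

Lemma inK_qsplit K t P : inK (dK K) P ->
  inK (dK K) (qsplit t P).1 /\ inK (dK K) (qsplit t P).2.
Proof.
move=> hP; split; first exact: inK_real.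
by rewrite /qsplit /=; case: eqP => _; [exact: inK_real | exact: inK_scale].
Qed.

End Surj.

Section Surj2.
Variables (R : realType) (K : KK) (k : nat).
Local Notation d := (dK K).
Local Notation M := 'M[R]_(k, d).

Fixpoint Pn (t : nat -> R) (P : quat R) (j : nat) : quat R :=
  if j is j'.+1 then (qsplit (t j') (Pn t P j')).2 else P.

Definition xs t P j := if (j < k.-1)%N then (qsplit (t j) (Pn t P j)).1 else Pn t P j.

Lemma surj_mx (t : nat -> R) (P : quat R) : (0 < k)%N -> inK d P ->
  exists X : M, (forall j, (j < k.-1)%N -> @tinv R K k X j = t j) /\
                @Sx R K k X 0 = P.
Proof.
move=> k0 hP.
have hPn j : inK d (Pn t P j).
  by elim: j => [|j IH] //=; have [] := inK_qsplit (t j) IH.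
have hxs j : inK d (xs t P j).
  by rewrite /xs; case: ifP => _ //; have [] := inK_qsplit (t j) (hPn j).
pose X : M := \matrix_(i, c) qcomp (xs t P i) c.
have hX : forall j, (j < k)%N -> @xn R K k X j = xs t P j.
  move=> j hj; rewrite (xn_lt _ hj).
  apply: (rowq_row (f := fun i : 'I_k => xs t P i)) => // o c; by rewrite mxE.
have hS : forall j, (j <= k.-1)%N -> @Sx R K k X j = Pn t P j.
  move=> j hj; move hm: (k.-1 - j)%N => m.
  elim: m j hj hm => [|m IH] j hj hm.
    have ej : j = k.-1 by apply/eqP; rewrite eqn_leq hj /= -subn_eq0 hm.
    have hjk : (j < k)%N by rewrite ej prednK.
    rewrite /Sx SfS // hX // ej /xs ltnn -ej.
    by rewrite (_ : j.+1 = k) ?Sfk ?qmulq1 // ej prednK.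
  have hjk : (j < k.-1)%N by rewrite -subn_gt0 hm.
  have hjk' : (j < k)%N by apply: leq_trans hjk (leq_pred _).
  rewrite /Sx SfS // -/(Sx _ _) IH //; last by rewrite subnS hm.
  by rewrite hX // /xs hjk /=; case: (qsplit_ok (t j) (Pn t P j)).
exists X; split; last by rewrite hS.
move=> j hj; have hjk' : (j < k)%N by apply: leq_trans hj (leq_pred _).
rewrite /tinv hX // hS // /xs hj /=.
by case: (qsplit_ok (t j) (Pn t P j)).
Qed.

End Surj2.
Section Cont.
Variable R : realType.
Variable T : topologicalType.
Implicit Types f g : T -> R.

Lemma cD f g : continuous f -> continuous g -> continuous (fun x => f x + g x).
Proof. by move=> hf hg x; apply: cvgD; [exact: hf|exact: hg]. Qed.
Lemma cB f g : continuous f -> continuous g -> continuous (fun x => f x - g x).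
Proof. by move=> hf hg x; apply: cvgB; [exact: hf|exact: hg]. Qed.
Lemma cM f g : continuous f -> continuous g -> continuous (fun x => f x * g x).
Proof. by move=> hf hg x; apply: cvgM; [exact: hf|exact: hg]. Qed.
Lemma cN f : continuous f -> continuous (fun x => - f x).
Proof. by move=> hf x; apply: cvgN; exact: hf. Qed.
Lemma cC (r : R) : continuous (fun _ : T => r).
Proof. by move=> x; exact: cvg_cst. Qed.

Definition qcont (h : T -> quat R) := forall c, continuous (fun x => qcomp (h x) c).

Lemma qcont_const q : qcont (fun _ => q).
Proof. by move=> c; exact: cC. Qed.

Ltac cont := repeat first [ apply: cB | apply: cD | apply: cM | apply: cN | assumption | exact: cC ].

Lemma qcont_mul (u v : T -> quat R) : qcont u -> qcont v -> qcont (fun x => qmul (u x) (v x)).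
Proof.
move=> hf hg c.
have f0 := hf 0%N; have f1 := hf 1%N; have f2 := hf 2%N; have f3 := hf 3%N.
have g0 := hg 0%N; have g1 := hg 1%N; have g2 := hg 2%N; have g3 := hg 3%N.
rewrite /qcomp /= in f0 f1 f2 f3 g0 g1 g2 g3.
case: c => [|[|[|[|c]]]]; rewrite /qcomp /=; try exact: cC; cont.
Qed.

Lemma qnorm2_cont (u : T -> quat R) : qcont u -> continuous (fun x => qnorm2 (u x)).
Proof.
move=> hf.
have f0 := hf 0%N; have f1 := hf 1%N; have f2 := hf 2%N; have f3 := hf 3%N.
rewrite /qcomp /= in f0 f1 f2 f3.
rewrite /qnorm2 /=; rewrite /GRing.exp /=; cont.
Qed.

End Cont.
Section Fmap.
Variables (R : realType) (K : KK) (k : nat).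
Local Notation d := (dK K).
Local Notation M := 'M[R]_(k, d).
Local Notation n := (d + k - 1)%N.
Local Notation xn := (@xn R K k).
Local Notation Sx := (@Sx R K k).
Local Notation tinv := (@tinv R K k).

Definition Fmap (X : M) : 'rV[R]_n :=
  \row_(i < n) (if (i < k.-1)%N then tinv X i else qcomp (Sx X 0) (i - k.-1)).

Lemma mx_cont (T : topologicalType) a b (f : T -> 'M[R]_(a, b)) :
  (forall i j, continuous (fun x => f x i j)) -> continuous f.
Proof.
move=> h x; apply/cvg_ballP => e e0.
have : \forall y \near x, forall ij : ('I_a * 'I_b)%type,
    ball (f x ij.1 ij.2) e (f y ij.1 ij.2).
  apply: filter_forall => -[i j]; have := h i j x; move/cvg_ballP => /(_ e e0).
  by [].
by apply: filterS => y Hy; split => // i j; exact: (Hy (i, j)).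
Qed.

Lemma cont_ext (T : topologicalType) (f g : T -> R) :
  (forall x, f x = g x) -> continuous g -> continuous f.
Proof. by move=> e; rewrite (_ : f = g) //; apply: funext. Qed.

Lemma qcont_xn j : qcont (fun X : M => xn X j).
Proof.
move=> c; have [hj|hj] := ltnP j k; last first.
  apply: (cont_ext (g := fun _ => qcomp (qone R) c)) => [X|].
    by rewrite /xn insubF // ltnNge hj.
  exact: cC.
have [hc|hc] := ltnP c d; last first.
  apply: (cont_ext (g := fun _ => 0)) => [X|]; last exact: cC.
  by rewrite (xn_lt _ hj) /rowq qcomp_emb ?dK_le4 // coord_ge.
apply: (cont_ext (g := fun X : M => X (Ordinal hj) (Ordinal hc))) => [X|].
  by rewrite (xn_lt _ hj) /rowq qcomp_emb ?dK_le4 // (coord_lt _ hc) mxE.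
exact: coord_continuous.
Qed.

Lemma qcont_prodf j m : qcont (fun X : M => prodf (xn X) j m).
Proof.
elim: m j => [|m IH] j /=; first exact: qcont_const.
apply: qcont_mul; [exact: qcont_xn | exact: IH].
Qed.

Lemma qcont_Sx j : qcont (fun X : M => Sx X j).
Proof. exact: qcont_prodf. Qed.

Lemma tinv_cont j : continuous (fun X : M => tinv X j).
Proof. apply: cB; apply: qnorm2_cont; [exact: qcont_xn | exact: qcont_Sx]. Qed.

Lemma Fmap_cont : continuous Fmap.
Proof.
apply: mx_cont => i j.
apply: (cont_ext (g := fun X => if (j < k.-1)%N then tinv X j else qcomp (Sx X 0) (j - k.-1))).
  by move=> X; rewrite mxE.
case: (j < k.-1)%N; [exact: tinv_cont | exact: qcont_Sx].
Qed.

Lemma Fmap_orbit (X Y : M) : same_orbit X Y -> Fmap X = Fmap Y.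
Proof.
move=> [G [hG <-]]; apply/rowP => i; rewrite !mxE.
case: ifP => hi; last by rewrite Sx0_act.
rewrite tinv_act //; apply: leq_trans hi _; exact: leq_pred.
Qed.

Lemma nkE : (0 < k)%N -> n = (k.-1 + d)%N.
Proof. by move=> k0; rewrite -{1}(prednK k0) addnS subn1 /= addnC. Qed.

Lemma Fmap_inj (X Y : M) : (0 < k)%N -> Fmap X = Fmap Y -> same_orbit X Y.
Proof.
move=> k0 e; apply: inj_orbit => //.
  move=> j hj.
  have hjn : (j < n)%N by rewrite nkE // ltn_addr.
  by have := congr1 (fun v : 'rV[R]_n => v ord0 (Ordinal hjn)) e; rewrite !mxE /= hj.
have hc c : qcomp (Sx X 0) c = qcomp (Sx Y 0) c.
  have [hcd|hcd] := ltnP c d.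
    have hcn : (k.-1 + c < n)%N by rewrite nkE // ltn_add2l.
    have := congr1 (fun v : 'rV[R]_n => v ord0 (Ordinal hcn)) e; rewrite !mxE /=.
    by rewrite ltnNge leq_addr /= addKn.
  have hX : inK d (Sx X 0) by apply: inK_Sf; exact: inK_xn.
  have hY : inK d (Sx Y 0) by apply: inK_Sf; exact: inK_xn.
  by rewrite hX // hY.
by rewrite -(qcompE (Sx X 0)) -(qcompE (Sx Y 0)) !hc.
Qed.

Lemma Fmap_surj (y : 'rV[R]_n) : (0 < k)%N -> exists X : M, Fmap X = y.
Proof.
move=> k0.
pose P : quat R := Quat (Defs.coord y k.-1) (Defs.coord y k.-1.+1) (Defs.coord y k.-1.+2) (Defs.coord y k.-1.+3).
have hP c : (c < 4)%N -> qcomp P c = Defs.coord y (k.-1 + c)%N.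
  by case: c => [|[|[|[|c]]]] // _; rewrite /qcomp /= ?addn0 ?addn1 ?addn2 ?addn3.
have nk := nkE k0.
have PK : inK d P.
  move=> c hc; have [c4|c4] := ltnP c 4.
    by rewrite hP // coord_ge // nk leq_add2l.
  by case: c {hc} c4 => [|[|[|[|c]]]] // _; rewrite /qcomp /= nth_nil.
have [X [hX1 hX2]] := surj_mx (fun j => Defs.coord y j) k0 PK.
exists X; apply/rowP => i; rewrite !mxE.
case: ifP => hi; first by rewrite hX1 // (coord_lt _ (ltn_ord i)); congr (y _ _); exact: val_inj.
have hi' : (k.-1 <= i)%N by rewrite leqNgt hi.
have hid : (i - k.-1 < d)%N by rewrite ltn_subLR // -nk.
rewrite hX2 hP; last exact: leq_trans hid (dK_le4 K).
by rewrite subnKC // (coord_lt _ (ltn_ord i)); congr (y _ _); exact: val_inj.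
Qed.

End Fmap.
Section Bound.
Variable R : realType.

Lemma absum_ineq (a b : R) : 0 <= a -> 0 <= b -> a + b <= `|a - b| + 1 + a * b.
Proof.
move=> a0 b0; have [ab|ab] := leP b a.
  have h1 : 0 <= b * (a - b) by apply: mulr_ge0; lra.
  have h2 : 0 <= (b - 1) ^+ 2 by exact: sqr_ge0.
  rewrite ger0_norm ?subr_ge0 //; nra.
have h1 : 0 <= a * (b - a) by apply: mulr_ge0; lra.
have h2 : 0 <= (a - 1) ^+ 2 by exact: sqr_ge0.
rewrite ltr0_norm ?subr_lt0 //; nra.
Qed.

Lemma abs_le_sq (z : R) : `|z| <= 1 + z ^+ 2.
Proof. rewrite ler_norml; apply/andP; split; nra. Qed.

Lemma qcomp_sq_le (q : quat R) c : qcomp q c ^+ 2 <= qnorm2 q.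
Proof.
case: q => a b e f; rewrite /qnorm2 /=.
case: c => [|[|[|[|c]]]]; rewrite /qcomp /=; try nra.
by rewrite nth_nil expr0n /=; nra.
Qed.

End Bound.

Section FBound.
Variables (R : realType) (K : KK) (k : nat).
Local Notation d := (dK K).
Local Notation M := 'M[R]_(k, d).
Local Notation n := (d + k - 1)%N.
Local Notation xn := (@xn R K k).
Local Notation Sx := (@Sx R K k).
Local Notation tinv := (@tinv R K k).
Local Notation Fmap := (@Fmap R K k).

Lemma entry_rowq (X : M) i j : X i j = qcomp (rowq X i) j.
Proof.
by rewrite /rowq qcomp_emb ?dK_le4 // (coord_lt _ (ltn_ord j)) mxE; congr (X _ _); apply: val_inj.
Qed.

Lemma Fmap_bound (y : 'rV[R]_n) : (0 < k)%N -> exists B : R, forall X : M,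
  (forall i, `|Fmap X ord0 i - y ord0 i| <= 1) -> forall i j, `|X i j| <= B.
Proof.
move=> k0.
pose Mb : R := 1 + \sum_i `|y ord0 i|.
have Mb0 : 0 <= Mb by rewrite addr_ge0 // sumr_ge0.
pose C (j : nat) : R := 4 * Mb ^+ 2 + j%:R * (Mb + 1).
exists (1 + (C k + Mb + 1)) => X hX.
have hF i : `|Fmap X ord0 i| <= Mb.
  have h1 : `|y ord0 i| <= \sum_i `|y ord0 i|.
    by rewrite (bigD1 i) //= lerDl sumr_ge0.
  have := ler_normD (Fmap X ord0 i - y ord0 i) (y ord0 i).
  rewrite subrK /Mb => h; apply: le_trans h _; exact: lerD.
have ht j : (j < k.-1)%N -> `|tinv X j| <= Mb.
  move=> hj; have hjn : (j < n)%N by rewrite nkE // ltn_addr.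
  by have := hF (Ordinal hjn); rewrite mxE /= hj.
have hp : qnorm2 (Sx X 0) <= C 0.
  have hc c : qcomp (Sx X 0) c ^+ 2 <= Mb ^+ 2.
    have [hcd|hcd] := ltnP c d.
      have hcn : (k.-1 + c < n)%N by rewrite nkE // ltn_add2l.
      have := hF (Ordinal hcn); rewrite mxE /= ltnNge leq_addr /= addKn => h.
      move: h; rewrite ler_norml => /andP [h1 h2]; nra.
    have hX0 : inK d (Sx X 0) by apply: inK_Sf; exact: inK_xn.
    by rewrite hX0 // expr0n /= exprn_ge0.
  have h0 := hc 0%N; have h1 := hc 1%N; have h2 := hc 2%N; have h3 := hc 3%N.
  rewrite /qcomp /= in h0 h1 h2 h3.
  rewrite /C /qnorm2 mul0r addr0; lra.
have hS : forall j, (j <= k.-1)%N -> qnorm2 (Sx X j) <= C j.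
  elim=> [//|j IH hj].
  have hjk : (j < k.-1)%N by [].
  have hjk' : (j < k)%N by apply: leq_trans hjk (leq_pred _).
  have := absum_ineq (qnorm2_ge0 (xn X j)) (qnorm2_ge0 (Sx X j.+1)).
  rewrite -qnorm2_mul /Sx -SfS // -/(Sx X j) -/(Sx X j.+1).
  have := IH (ltnW hj); have := ht j hjk; rewrite /tinv.
  have := qnorm2_ge0 (xn X j).
  rewrite /C -natr1; lra.
have hrow : forall i : 'I_k, qnorm2 (rowq X i) <= C k + Mb + 1.
  move=> i; rewrite -xn_ord.
  have hCk : forall j, (j <= k)%N -> C j <= C k.
    move=> j hj; rewrite /C lerD2l ler_wpM2r ?ler_nat //.
    exact: addr_ge0.
  have [hi|hi] := ltnP i k.-1.
    have := absum_ineq (qnorm2_ge0 (xn X i)) (qnorm2_ge0 (Sx X i.+1)).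
    rewrite -qnorm2_mul /Sx -SfS ?ltn_ord // -/(Sx X i) -/(Sx X i.+1).
    have := hS i (ltnW hi); have := ht i hi; rewrite /tinv.
    have := qnorm2_ge0 (Sx X i.+1); have := hCk i (ltnW (ltn_ord i)).
    lra.
  have ei : val i = k.-1.
    by apply/eqP; rewrite eqn_leq hi andbT -ltnS prednK // ltn_ord.
  have hk1 : (k.-1 < k)%N by rewrite prednK.
  have := hS k.-1 (leqnn _); rewrite /Sx (SfS _ hk1) (prednK k0) Sfk qmulq1 => h.
  rewrite ei; have := hCk k.-1 (leq_pred _); lra.
move=> i j; rewrite entry_rowq.
apply: le_trans (abs_le_sq _) _; rewrite lerD2l.
exact: le_trans (qcomp_sq_le _ _) (hrow i).
Qed.

End FBound.
Section Closed.
Variables (R : realType) (K : KK) (k : nat).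
Local Notation d := (dK K).
Local Notation M := 'M[R]_(k, d).
Local Notation n := (d + k - 1)%N.
Local Notation Fmap := (@Fmap R K k).
Local Open Scope classical_set_scope.

Lemma vec_mx_cont : continuous (@vec_mx R k d).
Proof.
apply: mx_cont => i j.
apply: (cont_ext (g := fun v : 'rV[R]_(k * d) => v ord0 (mxvec_index i j))) => [v|].
  by rewrite mxE.
exact: coord_continuous.
Qed.

Lemma Fmap_closed (A : set M) : (0 < k)%N -> closed A -> closed (Fmap @` A).
Proof.
move=> k0 cA y Hy.
have [B hB] := Fmap_bound y k0.
pose F' := fun v : 'rV[R]_(k * d) => Fmap (vec_mx v).
have cF' : continuous F'.
  move=> v; apply: continuous_comp; [exact: vec_mx_cont | exact: Fmap_cont].
pose D := [set z : 'rV[R]_n | forall i, `[y ord0 i - 1, y ord0 i + 1] (z ord0 i)].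
have cD : closed D.
  apply: compact_closed; first exact: norm_hausdorff.
  exact: (rV_compact (A := fun i => `[y ord0 i - 1, y ord0 i + 1]) (fun i => @segment_compact R _ _)).
pose Bx := [set v : 'rV[R]_(k * d) | forall l, `[- B, B] (v ord0 l)].
have kBx : compact Bx.
  exact: (rV_compact (A := fun i => `[- B, B]) (fun i => @segment_compact R _ _)).
pose C := (vec_mx @^-1` A) `&` (F' @^-1` D) `&` Bx.
have cC : closed C.
  apply: closedI; last by apply: compact_closed; [exact: norm_hausdorff|].
  apply: closedI.
    by apply: preimage_closed; [move=> x _; exact: vec_mx_cont|exact: cA].
  by apply: preimage_closed; [move=> x _; exact: cF'|exact: cD].
have kC : compact C by apply: subclosed_compact cC kBx _ => v [].
have kFC : compact (F' @` C).
  by apply: continuous_compact => //; exact: continuous_subspaceT.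
have cFC : closed (F' @` C) by apply: compact_closed => //; exact: norm_hausdorff.
suff : (F' @` C) y by case=> v [[Av _] _] <-; exists (vec_mx v); [exact: Av|].
apply: cFC => Bn nB.
have nB1 : nbhs y (Bn `&` ball y 1) by apply: filterI => //; exact: nbhsx_ballx.
have [z [[X AX <-] [zB zball]]] := Hy _ nB1.
have hFy : forall i, `|Fmap X ord0 i - y ord0 i| <= 1.
  move=> i; move: zball => [_ /(_ ord0 i)].
  by rewrite -ball_normE /ball_ /= distrC => h; exact: ltW.
exists (Fmap X); split => //.
exists (mxvec X); last by rewrite /F' mxvecK.
have hD : D (Fmap X).
  move=> i; have := hFy i; move: (Fmap X ord0 i) (y ord0 i) => w w'.
  rewrite ler_norml /= in_itv /= => /andP [h1 h2].
  apply/andP; split; lra.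
split; [split|].
- change (A (vec_mx (mxvec X))); rewrite mxvecK; exact: AX.
- change (D (Fmap (vec_mx (mxvec X)))); rewrite mxvecK; exact: hD.
- move=> l; case/mxvec_indexP: l => i j.
  change (`[- B, B] (mxvec X ord0 (mxvec_index i j))); rewrite mxvecE.
  have := hB X hFy i j; move: (X i j) => w.
  by rewrite /= in_itv ler_norml.
Qed.

End Closed.

Local Open Scope quotient_scope.
Local Open Scope classical_set_scope.

Theorem proposition3p5 (R : realType) (K : KK) (k : nat) (hk : (2 <= k)%N) :
  exists (f : orbit_space R K k -> 'rV[R]_(dK K + k - 1))
         (g : 'rV[R]_(dK K + k - 1) -> orbit_space R K k),
    homeomorphism f g.
Proof.
have k0 : (0 < k)%N by apply: leq_trans hk.
pose Q := orbit_space R K k.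
pose s y := proj1_sig (cid (@Fmap_surj R K k y k0)).
have hs y : Fmap (s y) = y := proj2_sig (cid (@Fmap_surj R K k y k0)).
have piE X Y : \pi_Q X = \pi_Q Y <-> same_orbit X Y.
  split => [h|h]; first by have /eqmodP := h; move/asboolP.
  by apply/eqmodP; apply/asboolP.
have fpi X : Fmap (repr (\pi_Q X)) = Fmap X.
  apply: Fmap_orbit; apply/piE; exact: reprK.
pose f (z : Q) := Fmap (repr z).
pose g y : Q := \pi_Q (s y).
have fgK : cancel g f by move=> y; rewrite /f /g fpi hs.
have gfK : cancel f g.
  move=> z; rewrite /f /g -[RHS]reprK; apply/piE.
  by apply: Fmap_inj => //; rewrite hs.
exists f, g; split => //.
- apply/quotient_continuous.
  rewrite (_ : f \o \pi_Q = @Fmap R K k); first exact: Fmap_cont.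
  by apply: funext => X /=; rewrite /f fpi.
- apply/continuousP => U oU.
  have -> : g @^-1` U = ~` (@Fmap R K k @` (~` (\pi_Q @^-1` U))).
    apply/seteqP; split => y /=.
      move=> gU [X nU eX]; apply: nU.
      suff -> : \pi_Q X = g y by [].
      by rewrite -eX -(fpi X) -/(f (\pi_Q X)) gfK.
    move=> h; apply: contrapT => ngU; apply: h.
    by exists (s y).
  apply: closed_openC; apply: Fmap_closed => //.
  by rewrite closedC.
Qed.
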